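(* Let $G$ be a finite simple undirected graph without isolated vertices and let $v_0 \in V(G)$. Then $$\tau(G) \le \sum_{v \in N[v_0]} TDV_G(v) \le \tau(G)\cdot \gamma_t(G),$$ and both bounds are sharp (i.e., each is attained with equality for some such graph $G$ and vertex $v_0$).
   Context: A set $D \subseteq V(G)$ is a total dominating set (TDS) of $G$ if every vertex $v\in V(G)$ has a neighbor in $D$. The total domination number $\gamma_t(G)$ is the minimum cardinality of a TDS; a TDS of cardinality $\gamma_t(G)$ is a $\gamma_t(G)$-set. $\tau(G)$ denotes the number of $\gamma_t(G)$-sets, and for $v\in V(G)$, the total domination value $TDV_G(v)$ is the number of $\gamma_t(G)$-sets containing $v$. $N[v_0]=N(v_0)\cup\{v_0\}$ is the closed neighborhood of $v_0$. *)

(* Defs.v *)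
From mathcomp Require Import all_boot.
Set Implicit Arguments. Unset Strict Implicit. Unset Printing Implicit Defensive.

Definition simple_graph (T : finType) (e : rel T) : Prop :=
  symmetric e /\ irreflexive e.

Definition no_isolated (T : finType) (e : rel T) : Prop :=
  forall v : T, exists u : T, e v u.

Definition nbhd (T : finType) (e : rel T) (v : T) : {set T} := [set u | e v u].
Definition cnbhd (T : finType) (e : rel T) (v : T) : {set T} := v |: nbhd e v.

Definition is_tds (T : finType) (e : rel T) (D : {set T}) : bool :=
  [forall v : T, exists u in D, e v u].

(* total domination number (well defined when a TDS exists, e.g. no isolated
   vertices; the default #|T| is then never below the true minimum) *)
Definition gamma_t (T : finType) (e : rel T) : nat :=
  \big[minn/#|T|]_(D : {set T} | is_tds e D) #|D|.

Definition gamma_t_sets (T : finType) (e : rel T) : {set {set T}} :=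
  [set D : {set T} | is_tds e D && (#|D| == gamma_t e)].

Definition tau (T : finType) (e : rel T) : nat := #|gamma_t_sets e|.

Definition TDV (T : finType) (e : rel T) (v : T) : nat :=
  #|[set D in gamma_t_sets e | v \in D]|.

Definition sumTDV (T : finType) (e : rel T) (v0 : T) : nat :=
  \sum_(v in cnbhd e v0) TDV e v.

(* Main.v *)
Require Import Defs.
From mathcomp Require Import all_boot.

Definition e4 : rel 'I_4 := fun x y => (x.+1 == y :> nat) || (y.+1 == x :> nat).
Definition e2 : rel bool := fun x y => x != y.

Lemma fin_simple (T : finType) (e : rel T) :
  [forall x, forall y, e x y == e y x] -> [forall x, ~~ e x x] ->
  [forall x, exists y, e x y] -> simple_graph e /\ no_isolated e.
Proof.
move=> /forallP H1 /forallP H2 /forallP H3; split; [split|].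
- by move=> x y; apply/eqP; have /forallP := H1 x; apply.
- by move=> x; apply/negbTE/H2.
- by move=> x; have /existsP := H3 x.
Qed.

Lemma TDV_sum (T : finType) (e : rel T) v :
  TDV e v = \sum_(D in gamma_t_sets e) (v \in D : nat).
Proof.
rewrite /TDV -sum1_card big_mkcond [RHS]big_mkcond /=.
by apply: eq_bigr => D _; rewrite inE; case: (D \in _); case: (v \in D).
Qed.

Lemma unique_min (T : finType) (e : rel T) (M : {set T}) :
  is_tds e M -> (forall D, is_tds e D -> M \subset D) ->
  gamma_t_sets e = [set M] /\ gamma_t e = #|M|.
Proof.
move=> HM Hall.
have Hg : gamma_t e = #|M|.
  apply/eqP; rewrite eqn_leq; apply/andP; split.
    rewrite /gamma_t; have : M \in index_enum {set T} by rewrite mem_index_enum.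
    elim: (index_enum _) => //= D r IH; rewrite inE big_cons.
    case/orP => [/eqP <-|/IH H]; first by rewrite HM geq_minl.
    by case: ifP => _ //; rewrite geq_min H orbT.
  rewrite /gamma_t; elim/big_ind: _ => //.
  - exact: max_card.
  - by move=> x y Hx Hy; rewrite leq_min Hx Hy.
  - by move=> D HD; apply: subset_leq_card; apply: Hall.
split => //; apply/setP => D; rewrite !inE Hg.
apply/idP/eqP => [/andP [HD /eqP Hc]|->]; last by rewrite HM eqxx.
apply/eqP; rewrite eq_sym eqEcard Hc leqnn andbT; exact: Hall.
Qed.

Lemma sum_unique (T : finType) (e : rel T) (M : {set T}) v0 :
  gamma_t_sets e = [set M] -> sumTDV e v0 = #|M :&: cnbhd e v0| /\ tau e = 1.
Proof.
move=> HS; split; last by rewrite /tau HS cards1.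
rewrite /sumTDV (eq_bigr _ (fun v _ => @TDV_sum T e v)) HS.
rewrite (eq_bigr (fun v => (v \in M : nat))); last by move=> v _; rewrite big_set1.
rewrite -sum1_card big_mkcond [RHS]big_mkcond /=.
by apply: eq_bigr => v _; rewrite !inE; case: (v \in M); case: (_ || _).
Qed.
Definition M4 : {set 'I_4} := [set x : 'I_4 | (x == 1 :> nat) || (x == 2 :> nat)].

Lemma M4_tds : is_tds e4 M4.
Proof.
apply/forallP => -[[|[|[|[|m]]]] Hm] //; apply/existsP.
- by exists (Ordinal (isT : 1 < 4)); rewrite inE.
- by exists (Ordinal (isT : 2 < 4)); rewrite inE.
- by exists (Ordinal (isT : 1 < 4)); rewrite inE.
- by exists (Ordinal (isT : 2 < 4)); rewrite inE.
Qed.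

Lemma M4_min D : is_tds e4 D -> M4 \subset D.
Proof.
move=> /forallP HD; apply/subsetP => x; rewrite inE => /orP [] /eqP Hx.
- have /existsP [u /andP [uD eu]] := HD (Ordinal (isT : 0 < 4)).
  have -> : x = u by apply: val_inj; move: eu; rewrite /e4 /= Hx; case: u {uD} => [[|[|m]] Hm].
  done.
- have /existsP [u /andP [uD eu]] := HD (Ordinal (isT : 3 < 4)).
  have -> : x = u; last done.
  apply: val_inj; move: eu; rewrite /e4 /= Hx; case: u {uD} => [[|[|[|[|m]]]] Hm] //.
Qed.

Lemma ex1 : sumTDV e4 ord0 = tau e4.
Proof.
have [HS _] := @unique_min _ _ _ M4_tds M4_min.
have [-> ->] := @sum_unique _ _ _ ord0 HS.
have -> : M4 :&: cnbhd e4 ord0 = [set Ordinal (isT : 1 < 4)].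
  by apply/setP => -[[|[|[|[|m]]]] Hm]; rewrite !inE /e4 /=.
by rewrite cards1.
Qed.

Definition e2' := e2.
Lemma ex2 : sumTDV e2 true = tau e2 * gamma_t e2.
Proof.
have HM : is_tds e2 setT by apply/forallP => x; apply/existsP; exists (~~ x); rewrite in_setT /e2; case: x.
have Hmin D : is_tds e2 D -> setT \subset D.
  move=> /forallP HD; apply/subsetP => x _.
  have /existsP [u /andP [uD eu]] := HD (~~ x).
  by move: uD eu; rewrite /e2; case: x; case: u.
have [HS Hg] := @unique_min _ _ _ HM Hmin.
have [-> ->] := @sum_unique _ _ _ true HS.
rewrite Hg.
have -> : [set: bool] :&: cnbhd e2 true = setT by apply/setP => -[]; rewrite !inE.
by rewrite cardsT card_bool.
Qed.
Lemma part1 (T : finType) (e : rel T) (v0 : T) :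
      tau e <= sumTDV e v0 <= tau e * gamma_t e.
Proof.
  have E : sumTDV e v0 = \sum_(D in gamma_t_sets e) \sum_(v in cnbhd e v0) (v \in D : nat).
    rewrite /sumTDV (eq_bigr _ (fun v _ => @TDV_sum T e v)).
    exact: exchange_big.
idtac "A".
  rewrite E; apply/andP; split.
  + rewrite /tau -sum1_card; apply: leq_sum => D.
    rewrite inE => /andP [/forallP /(_ v0) /existsP [u /andP [uD eu]] _].
    have uA : u \in cnbhd e v0 by rewrite /cnbhd /nbhd !inE eu orbT.
    by rewrite (bigD1 u) //= uD.
  + idtac "B". rewrite /tau -sum1_card big_distrl /=; apply: leq_sum => D.
    rewrite inE => /andP [_ /eqP <-]; rewrite mul1n.
    rewrite -sum1_card big_mkcond [X in _ <= X]big_mkcond /=.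
    apply: leq_sum => v _; by case: (v \in cnbhd e v0); case: (v \in D).
Qed.

Theorem proposition2p4 :
  (forall (T : finType) (e : rel T) (v0 : T),
      simple_graph e -> no_isolated e ->
      tau e <= sumTDV e v0 <= tau e * gamma_t e)
  /\ (exists (T : finType) (e : rel T) (v0 : T),
      simple_graph e /\ no_isolated e /\ sumTDV e v0 = tau e)
  /\ (exists (T : finType) (e : rel T) (v0 : T),
      simple_graph e /\ no_isolated e /\ sumTDV e v0 = tau e * gamma_t e).
Proof.
split; [|split].
- by move=> T e v0 _ _; apply: part1.
- exists ('I_4 : finType), e4, ord0.
  have H1 : simple_graph e4.
    split; first by move=> x y; rewrite /e4 orbC.
    by move=> x; rewrite /e4 orbb (gtn_eqF (ltnSn x)).
  have H2 : no_isolated e4.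
    move=> v; case: v => [[|[|[|[|m]]]] Hm].
    - by exists (Ordinal (isT : 1 < 4)).
    - by exists (Ordinal (isT : 2 < 4)).
    - by exists (Ordinal (isT : 3 < 4)).
    - by exists (Ordinal (isT : 2 < 4)).
    - by [].
  by split; [exact: H1|split; [exact: H2|exact: ex1]].
- exists (bool : finType), e2, true.
  have H1 : simple_graph e2.
    split; first by move=> x y; rewrite /e2 eq_sym.
    by move=> x; rewrite /e2 eqxx.
  have H2 : no_isolated e2 by move=> v; exists (~~ v); case: v.
  by split; [exact: H1|split; [exact: H2|exact: ex2]].
Qed.
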